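(* There are ring homomorphisms $$\mathrm{B}(\mathbb{Z})\longrightarrow\mathrm{B}(\mathcal{R})\longrightarrow\mathrm{B}(\mathbb{Z})$$ whose composition is the identity of $\mathrm{B}(\mathbb{Z})$.
   Context: $\mathrm{B}(\mathbb{Z})$ is the Burnside ring of finite $\mathbb{Z}$-sets: the Grothendieck ring of isomorphism classes of pairs $(X,\pi)$ with $X$ a finite set and $\pi$ a permutation of $X$, with addition induced by disjoint union and multiplication by cartesian product (with permutation $\pi\times\pi'$). A rack is a set $R$ with a binary operation $\rhd$ such that every left multiplication $\ell_a\colon b\mapsto a\rhd b$ is a bijection and $a\rhd(b\rhd c)=(a\rhd b)\rhd(a\rhd c)$ for all $a,b,c$. A subrack is a subset $S$ with $\ell_s(S)=S$ for all $s\in S$; a decomposition of $R$ into $S$ and $T$ means $S,T$ are disjoint subracks (possibly empty) with $S\cup T=R$. The Burnside ring of finite racks $\mathrm{B}(\mathcal{R})$ is the abelian group generated by symbols $b(R)$, one for each finite rack $R$, subject to $b(R_1)=b(R_2)$ whenever $R_1\cong R_2$ and $b(R)=b(S)+b(T)$ whenever $R$ decomposes into $S$ and $T$, with ring structure $b(R)b(R')=b(R\times R')$ (cartesian product, componentwise operation) and unit the class of the singleton. *)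

(* Defs.v *)
From HB Require Import structures.
From mathcomp Require Import all_boot all_order all_algebra.
From mathcomp Require Import freeg.
Set Implicit Arguments. Unset Strict Implicit. Unset Printing Implicit Defensive.
Import GRing.Theory.
Local Open Scope ring_scope.

(* Finite racks, up to relabelling, are coded on carriers 'I_n.        *)
Definition rackop (n : nat) := {ffun 'I_n -> {ffun 'I_n -> 'I_n}}.

(* every left multiplication is a bijection (= injective, finite carrier)
   and left self-distributivity a > (b > c) = (a > b) > (a > c). *)
Definition is_rackb n (f : rackop n) : bool :=
  [forall a, injectiveb (f a)] &&
  [forall a, forall b, forall c, f a (f b c) == f (f a b) (f a c)].

Definition rack_on n := {f : rackop n | is_rackb f}.
Definition frack := {n : nat & rack_on n}.

Definition rcar (R : frack) := 'I_(tag R).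
Definition rop (R : frack) (a b : rcar R) : rcar R := val (tagged R) a b.

Definition rack_hom (R S : frack) (f : rcar R -> rcar S) : Prop :=
  forall a b, f (rop a b) = rop (f a) (f b).

Definition rack_iso (R S : frack) : Prop :=
  exists f : rcar R -> rcar S, bijective f /\ rack_hom f.

Definition rack_decomp (R S T : frack) : Prop :=
  exists (i : rcar S -> rcar R) (j : rcar T -> rcar R),
    [/\ injective i /\ injective j, rack_hom i, rack_hom j,
        (forall a b, i a <> j b) &
        (forall x, (exists a, i a = x) \/ (exists b, j b = x))].

Definition triv_rackop : rackop 1 := [ffun a => [ffun b => b]].
Lemma triv_rackP : is_rackb triv_rackop.
Proof.
apply/andP; split.
  apply/forallP => a; apply/injectiveP => x y; by rewrite /triv_rackop !ffunE.
apply/forallP => a; apply/forallP => b; apply/forallP => c.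
by rewrite /triv_rackop !ffunE.
Qed.
Definition unit_rack : frack := Tagged rack_on (exist _ triv_rackop triv_rackP).

(* cartesian product rack (componentwise operation), transported from
   'I_n * 'I_m to 'I_#|'I_n * 'I_m| along enum_val / enum_rank.  The
   fallback branch never occurs (a product of racks is a rack). *)
Definition prod_rackop (R S : frack) : rackop #|{: rcar R * rcar S}| :=
  [ffun i => [ffun j =>
     let x := enum_val i in let y := enum_val j in
     enum_rank (rop x.1 y.1, rop x.2 y.2)]].
Definition rack_prod (R S : frack) : frack :=
  match insub (prod_rackop R S) with
  | Some f => Tagged rack_on f
  | None => unit_rack
  end.

(* Finite Z-sets = finite sets with a permutation, coded on 'I_n.      *)
Definition zperm_on n := {f : {ffun 'I_n -> 'I_n} | injectiveb f}.
Definition fzset := {n : nat & zperm_on n}.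

Definition zcar (X : fzset) := 'I_(tag X).
Definition zact (X : fzset) (a : zcar X) : zcar X := val (tagged X) a.

Definition zhom (X Y : fzset) (f : zcar X -> zcar Y) : Prop :=
  forall a, f (zact a) = zact (f a).

Definition zset_iso (X Y : fzset) : Prop :=
  exists f : zcar X -> zcar Y, bijective f /\ zhom f.

Definition zset_decomp (X Y Z : fzset) : Prop :=
  exists (i : zcar Y -> zcar X) (j : zcar Z -> zcar X),
    [/\ injective i /\ injective j, zhom i, zhom j,
        (forall a b, i a <> j b) &
        (forall x, (exists a, i a = x) \/ (exists b, j b = x))].

Definition triv_zperm : {ffun 'I_1 -> 'I_1} := [ffun a => a].
Lemma triv_zpermP : injectiveb triv_zperm.
Proof. by apply/injectiveP => x y; rewrite !ffunE. Qed.
Definition unit_zset : fzset := Tagged zperm_on (exist _ triv_zperm triv_zpermP).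

Definition prod_zperm (X Y : fzset) : {ffun 'I_#|{: zcar X * zcar Y}| -> 'I_#|{: zcar X * zcar Y}|} :=
  [ffun i => let x := enum_val i in enum_rank (zact x.1, zact x.2)].
Definition zset_prod (X Y : fzset) : fzset :=
  match insub (prod_zperm X Y) with
  | Some f => Tagged zperm_on f
  | None => unit_zset
  end.

(* Presentations of the Burnside rings: free abelian group on the      *)
(* generators, modulo the subgroup generated by the relations.         *)
Inductive zspan (G : zmodType) (P : G -> Prop) : G -> Prop :=
  | zspan0 : zspan P 0
  | zspanD x y : P x -> zspan P y -> zspan P (y + x)
  | zspanB x y : P x -> zspan P y -> zspan P (y - x).

Definition preBR := {freeg frack / int}.
Definition BR_rel (x : preBR) : Prop :=
  (exists R1 R2, rack_iso R1 R2 /\ x = << R1 >> - << R2 >>) \/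
  (exists R S T, rack_decomp R S T /\ x = << R >> - (<< S >> + << T >>)).
Definition BR_eq (x y : preBR) : Prop := zspan BR_rel (x - y).
Definition BR_one : preBR := << unit_rack >>.
(* bilinear extension of b(R) b(R') = b(R x R') *)
Definition BR_mul (x y : preBR) : preBR :=
  fglift (fun R => fglift (fun S => << rack_prod R S >> : preBR) y) x.

Definition preBZ := {freeg fzset / int}.
Definition BZ_rel (x : preBZ) : Prop :=
  (exists X1 X2, zset_iso X1 X2 /\ x = << X1 >> - << X2 >>) \/
  (exists X Y Z, zset_decomp X Y Z /\ x = << X >> - (<< Y >> + << Z >>)).
Definition BZ_eq (x y : preBZ) : Prop := zspan BZ_rel (x - y).
Definition BZ_one : preBZ := << unit_zset >>.
Definition BZ_mul (x y : preBZ) : preBZ :=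
  fglift (fun X => fglift (fun Y => << zset_prod X Y >> : preBZ) y) x.

(* A map of presentations inducing a (unital) ring homomorphism between
   the quotient rings (A/eqA, +, mulA, oneA) -> (B/eqB, +, mulB, oneB). *)
Definition induces_ring_hom (A B : zmodType)
  (eqA : A -> A -> Prop) (mulA : A -> A -> A) (oneA : A)
  (eqB : B -> B -> Prop) (mulB : B -> B -> B) (oneB : B) (f : A -> B) : Prop :=
  [/\ forall x y, eqA x y -> eqB (f x) (f y),
      forall x y, eqB (f (x + y)) (f x + f y),
      forall x y, eqB (f (mulA x y)) (mulB (f x) (f y)) &
      eqB (f oneA) oneB].

(* Main.v *)
Require Import Defs.
From HB Require Import structures.
From mathcomp Require Import all_boot all_order all_algebra.
From mathcomp Require Import freeg.
Set Implicit Arguments. Unset Strict Implicit. Unset Printing Implicit Defensive.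
Import GRing.Theory.
Local Open Scope ring_scope.

Section Span.
Variables (G : zmodType) (P : G -> Prop).
Lemma zspan_add a b : zspan P a -> zspan P b -> zspan P (a + b).
Proof.
move=> Ha; elim=> [|x y Px _ IH|x y Px _ IH]; first by rewrite addr0.
  by rewrite addrA; apply: zspanD.
by rewrite addrA; apply: zspanB.
Qed.
Lemma zspan_opp a : zspan P a -> zspan P (- a).
Proof.
elim=> [|x y Px _ IH|x y Px _ IH]; first by rewrite oppr0; apply: zspan0.
  by rewrite opprD; apply: zspanB.
by rewrite opprD opprK; apply: zspanD.
Qed.
Lemma zspan_sub a b : zspan P a -> zspan P b -> zspan P (a - b).
Proof. by move=> Ha Hb; apply: zspan_add => //; apply: zspan_opp. Qed.
Lemma zspan_gen x : P x -> zspan P x.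
Proof. by move=> Px; rewrite -[x]add0r; apply: zspanD => //; apply: zspan0. Qed.
Lemma zspan_muln a n : zspan P a -> zspan P (a *+ n).
Proof.
move=> Ha; elim: n => [|n IH]; first by rewrite mulr0n; apply: zspan0.
by rewrite mulrS; apply: zspan_add.
Qed.
Lemma zspan_mulz a (n : int) : zspan P a -> zspan P (a *~ n).
Proof.
move=> Ha; case: n => n; first by rewrite -pmulrn; apply: zspan_muln.
by rewrite NegzE mulrNz; apply: zspan_opp; rewrite -pmulrn; apply: zspan_muln.
Qed.
Lemma zspan_sum (I : Type) (s : seq I) (F : I -> G) :
  (forall i, zspan P (F i)) -> zspan P (\sum_(i <- s) F i).
Proof.
move=> H; elim: s => [|i s IH]; first by rewrite big_nil; apply: zspan0.
by rewrite big_cons; apply: zspan_add.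
Qed.
End Span.

Section FL.
Variable (K : choiceType) (M : lmodType int) (g : K -> M).
HB.instance Definition _ := GRing.isAdditive.Build _ _ (fglift g) (lift_is_additive g).
End FL.

Lemma scalez (V : lmodType int) (k : int) (v : V) : k *: v = v *~ k.
Proof. by rewrite -[in LHS](intz k) scaler_int. Qed.

Lemma fgliftE (K : choiceType) (M : lmodType int) (g : K -> M) (D : {freeg K / int}) :
  fglift g D = \sum_(z <- dom D) coeff z D *: g z.
Proof.
rewrite -{1}[D]freeg_sumE raddf_sum; apply: eq_bigr => z _; exact: liftU.
Qed.

Lemma fglift_comp (K1 K2 : choiceType) (M : lmodType int) (g : K1 -> {freeg K2 / int})
  (h : K2 -> M) D :
  fglift h (fglift g D) = fglift (fun z => fglift h (g z)) D.
Proof.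
rewrite (fgliftE g) (fgliftE (fun z => fglift h (g z))) raddf_sum.
by apply: eq_bigr => z _; rewrite !scalez raddfMz.
Qed.

Lemma fglift1 (K : choiceType) (M : lmodType int) (g : K -> M) (z : K) :
  fglift g << z >> = g z.
Proof. by rewrite liftU scale1r. Qed.

Lemma span_lift (K : choiceType) (V : lmodType int) (P : V -> Prop) (g h : K -> V) D :
  (forall z, zspan P (g z - h z)) -> zspan P (fglift g D - fglift h D).
Proof.
move=> H; rewrite !fgliftE -sumrB; apply: zspan_sum => z.
by rewrite -scalerBr scalez; apply: zspan_mulz.
Qed.

Lemma lift_id (K : choiceType) (D : {freeg K / int}) : fglift (fun z => << z >>) D = D.
Proof.
rewrite fgliftE -[RHS]freeg_sumE; apply: eq_bigr => z _.
rewrite scalez freegU_mulz intz. done.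
Qed.

Definition Grel (K : choiceType) (iso : K -> K -> Prop) (dec : K -> K -> K -> Prop)
  (x : {freeg K / int}) : Prop :=
  (exists R1 R2, iso R1 R2 /\ x = << R1 >> - << R2 >>) \/
  (exists R S T, dec R S T /\ x = << R >> - (<< S >> + << T >>)).
Definition Gmul (K : choiceType) (prod : K -> K -> K) (x y : {freeg K / int}) : {freeg K / int} :=
  fglift (fun R => fglift (fun S => << prod R S >> : {freeg K / int}) y) x.

Section Gen.
Variables (K1 K2 : choiceType) (iso1 : K1 -> K1 -> Prop) (dec1 : K1 -> K1 -> K1 -> Prop)
  (prod1 : K1 -> K1 -> K1) (u1 : K1)
  (iso2 : K2 -> K2 -> Prop) (dec2 : K2 -> K2 -> K2 -> Prop)
  (prod2 : K2 -> K2 -> K2) (u2 : K2) (F : K1 -> K2).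
Hypotheses (Fiso : forall a b, iso1 a b -> iso2 (F a) (F b))
  (Fdec : forall a b c, dec1 a b c -> dec2 (F a) (F b) (F c))
  (Fprod : forall a b, iso2 (F (prod1 a b)) (prod2 (F a) (F b)))
  (Funit : iso2 (F u1) u2).

Let f := fglift (fun x => << F x >> : {freeg K2 / int}).

Lemma gen_hom : induces_ring_hom
  (fun x y => zspan (Grel iso1 dec1) (x - y)) (Gmul prod1) << u1 >>
  (fun x y => zspan (Grel iso2 dec2) (x - y)) (Gmul prod2) << u2 >> f.
Proof.
split.
- move=> x y H; rewrite -raddfB.
  elim: H => [|a b Pa _ IH|a b Pa _ IH]; first by rewrite raddf0; apply: zspan0.
  + rewrite raddfD; apply: zspan_add => //.
    case: Pa => [[R1 [R2 [HI ->]]]|[R [S [T [HD ->]]]]]; apply: zspan_gen.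
      by left; exists (F R1), (F R2); split; [exact: Fiso | rewrite /f raddfB /= !fglift1].
    by right; exists (F R), (F S), (F T); split; [exact: Fdec | rewrite /f raddfB raddfD /= !fglift1].
  + rewrite raddfB; apply: zspan_sub => //.
    case: Pa => [[R1 [R2 [HI ->]]]|[R [S [T [HD ->]]]]]; apply: zspan_gen.
      by left; exists (F R1), (F R2); split; [exact: Fiso | rewrite /f raddfB /= !fglift1].
    by right; exists (F R), (F S), (F T); split; [exact: Fdec | rewrite /f raddfB raddfD /= !fglift1].
- by move=> x y; rewrite /f raddfD /= subrr; apply: zspan0.
- move=> x y; rewrite /Gmul /f !fglift_comp; apply: span_lift => R.
  rewrite fglift1 !fglift_comp; apply: span_lift => S.
  rewrite !fglift1; apply: zspan_gen; left; by exists (F (prod1 R S)), (prod2 (F R) (F S)).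
- rewrite /f fglift1; apply: zspan_gen; left; by exists (F u1), u2.
Qed.
End Gen.

Lemma gen_comp (K1 K2 : choiceType) (iso1 : K1 -> K1 -> Prop) (dec1 : K1 -> K1 -> K1 -> Prop)
  (F : K1 -> K2) (H : K2 -> K1) :
  (forall a, iso1 (H (F a)) a) ->
  forall x : {freeg K1 / int},
  zspan (Grel iso1 dec1)
    (fglift (fun y => << H y >> : {freeg K1 / int}) (fglift (fun y => << F y >> : {freeg K2 / int}) x) - x).
Proof.
move=> HF x; rewrite fglift_comp -{2}(lift_id x); apply: span_lift => z.
rewrite fglift1; apply: zspan_gen; left; by exists (H (F z)), z.
Qed.

Lemma rop_inj (R : frack) (a : rcar R) : injective (rop a).
Proof.
have /andP[/forallP H _] := valP (tagged R).
exact/injectiveP/(H a).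
Qed.

Lemma rop_dist (R : frack) (a b c : rcar R) : rop a (rop b c) = rop (rop a b) (rop a c).
Proof.
have /andP[_ /forallP H] := valP (tagged R).
by have /forallP/(_ b)/forallP/(_ c)/eqP := H a.
Qed.

Lemma rop_self (R : frack) (a b : rcar R) : rop (rop a a) b = rop a b.
Proof.
have [g _ gK] := injF_bij (@rop_inj R a).
by rewrite -[b]gK -rop_dist.
Qed.

Lemma rop_diag_inj (R : frack) : injective (fun a : rcar R => rop a a).
Proof.
move=> a b /= E.
have Ea : rop a a = rop b a by rewrite -(rop_self a a) E rop_self.
by apply: (@rop_inj R b); rewrite -Ea E.
Qed.

Lemma zact_inj (X : fzset) : injective (@zact X).
Proof. exact/injectiveP/(valP (tagged X)). Qed.

Definition F_op (X : fzset) : rackop (tag X) := [ffun a => [ffun b => zact b]].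
Lemma F_opP X : is_rackb (F_op X).
Proof.
apply/andP; split.
  apply/forallP => a; apply/injectiveP => x y; rewrite !ffunE; exact: zact_inj.
by apply/forallP => a; apply/forallP => b; apply/forallP => c; rewrite !ffunE.
Qed.
Definition Fz (X : fzset) : frack := Tagged rack_on (exist _ (F_op X) (F_opP X)).

Definition G_perm (R : frack) : {ffun 'I_(tag R) -> 'I_(tag R)} := [ffun a => rop a a].
Lemma G_permP R : injectiveb (G_perm R).
Proof. apply/injectiveP => x y; rewrite !ffunE; exact: rop_diag_inj. Qed.
Definition Gr (R : frack) : fzset := Tagged zperm_on (exist _ (G_perm R) (G_permP R)).

Lemma ropF X (a b : rcar (Fz X)) : rop a b = zact (b : zcar X).
Proof. by rewrite /rop /= !ffunE. Qed.
Lemma zactG R (a : zcar (Gr R)) : zact a = rop (a : rcar R) a.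
Proof. by rewrite /zact /= !ffunE. Qed.

Lemma Fiso X Y : zset_iso X Y -> rack_iso (Fz X) (Fz Y).
Proof. by case=> f [bf hf]; exists f; split => // a b; rewrite !ropF hf. Qed.
Lemma Giso R S : rack_iso R S -> zset_iso (Gr R) (Gr S).
Proof. by case=> f [bf hf]; exists f; split => // a; rewrite !zactG hf. Qed.

Lemma Fdec X Y Z : zset_decomp X Y Z -> rack_decomp (Fz X) (Fz Y) (Fz Z).
Proof.
case=> i [j [[ii ij] hi hj d c]]; exists i, j; split => //.
  by move=> a b; rewrite !ropF hi.
by move=> a b; rewrite !ropF hj.
Qed.
Lemma Gdec R S T : rack_decomp R S T -> zset_decomp (Gr R) (Gr S) (Gr T).
Proof.
case=> i [j [[ii ij] hi hj d c]]; exists i, j; split => //.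
  by move=> a; rewrite !zactG hi.
by move=> a; rewrite !zactG hj.
Qed.

Lemma GF X : zset_iso (Gr (Fz X)) X.
Proof.
exists id; split; first by exists id.
by move=> a; rewrite zactG ropF.
Qed.

Lemma Funit : rack_iso (Fz unit_zset) unit_rack.
Proof.
exists id; split; first by exists id.
by move=> a b; rewrite ropF /rop /zact /= !ffunE.
Qed.
Lemma Gunit : zset_iso (Gr unit_rack) unit_zset.
Proof.
exists id; split; first by exists id.
by move=> a; rewrite zactG /rop /zact /= !ffunE.
Qed.

Lemma prod_rackP R S : is_rackb (prod_rackop R S).
Proof.
apply/andP; split.
  apply/forallP => a; apply/injectiveP => x y; rewrite !ffunE.
  move/enum_rank_inj => [/rop_inj E1 /rop_inj E2].
  apply: enum_val_inj; case: (enum_val x) E1 E2 => ? ?; case: (enum_val y) => ? ? /= -> -> //.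
apply/forallP => a; apply/forallP => b; apply/forallP => c; rewrite !ffunE !enum_rankK /=.
by rewrite (rop_dist (enum_val a).1) (rop_dist (enum_val a).2).
Qed.

Lemma rack_prodE R S : rack_prod R S = Tagged rack_on (exist _ (prod_rackop R S) (prod_rackP R S)).
Proof. by rewrite /rack_prod (insubT _ (prod_rackP R S)). Qed.

Lemma prod_zpermP X Y : injectiveb (prod_zperm X Y).
Proof.
apply/injectiveP => x y; rewrite !ffunE.
move/enum_rank_inj => [/zact_inj E1 /zact_inj E2].
apply: enum_val_inj; case: (enum_val x) E1 E2 => ? ?; case: (enum_val y) => ? ? /= -> -> //.
Qed.

Lemma zset_prodE X Y : zset_prod X Y = Tagged zperm_on (exist _ (prod_zperm X Y) (prod_zpermP X Y)).
Proof.
rewrite /zset_prod; case: insubP => [u _ E|]; last by rewrite prod_zpermP.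
by congr Tagged; apply: val_inj.
Qed.

Lemma Fprod X Y : rack_iso (Fz (zset_prod X Y)) (rack_prod (Fz X) (Fz Y)).
Proof.
rewrite rack_prodE zset_prodE.
exists (fun i => i); split; first by exists (fun i => i).
move=> a b; rewrite /rop /= !ffunE /zact /= ffunE /=. by rewrite !ropF.
Qed.

Lemma Gprod R S : zset_iso (Gr (rack_prod R S)) (zset_prod (Gr R) (Gr S)).
Proof.
rewrite rack_prodE zset_prodE.
exists (fun i => i); split; first by exists (fun i => i).
move=> a; rewrite /zact /= !ffunE /rop /= ffunE /=. by rewrite ffunE !zactG.
Qed.

Theorem proposition6p3 :
  exists (phi : preBZ -> preBR) (psi : preBR -> preBZ),
    [/\ induces_ring_hom BZ_eq BZ_mul BZ_one BR_eq BR_mul BR_one phi,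
        induces_ring_hom BR_eq BR_mul BR_one BZ_eq BZ_mul BZ_one psi &
        forall x : preBZ, BZ_eq (psi (phi x)) x].
Proof.
exists (fglift (fun X => << Fz X >> : preBR)), (fglift (fun R => << Gr R >> : preBZ)); split.
- exact: (gen_hom Fiso Fdec Fprod Funit).
- exact: (gen_hom Giso Gdec Gprod Gunit).
- move=> x; exact: (gen_comp _ GF).
Qed.
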